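(* Let $G=(V,E)$ be a locally finite, connected, infinite graph and fix $x\in V$. Then $p''_{\mathrm{cut,E}}\le p''_{\mathrm{cut,V}}$.
   Context: Consider Bernoulli$(p)$ bond percolation on $G$ (each edge open independently with probability $p$), with law $\mathbb{P}_p$. For $K\subset V$: the outer vertex boundary is $\partial_V K=\{z\notin K:\exists y\in K,\ y\sim z\}$ and the edge boundary is $\Delta K=\{(y,z)\in E:y\in K,z\notin K\}$. Let $\mathscr{B}_E=\{\Delta S: S\text{ is the vertex set of a finite connected subgraph containing }x\}$ and $\mathscr{B}_V=\{\partial_V S: S\text{ is the vertex set of a finite connected subgraph containing }x\}$. For $\Pi\in\mathscr{B}_V$ and $v\in\Pi$, $A(x,v,\Pi)$ is the event that $x$ is connected to $v$ by an open path using no vertex of $\Pi\setminus\{v\}$; for $\Pi_E\in\mathscr{B}_E$ and $e\in\Pi_E$, $A(x,e,\Pi_E)$ is the event that $e$ is open and $x$ is connected to $e$ by an open path using no edge of $\Pi_E\setminus\{e\}$. Define $p''_{\mathrm{cut,V}}=\sup\{p\ge0:\inf_{\Pi\in\mathscr{B}_V}\sum_{v\in\Pi}\mathbb{P}_p[A(x,v,\Pi)]=0\}$ and $p''_{\mathrm{cut,E}}=\sup\{p\ge0:\inf_{\Pi_E\in\mathscr{B}_E}\sum_{e\in\Pi_E}\mathbb{P}_p[A(x,e,\Pi_E)]=0\}$. *)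

(* Defs.v *)
From mathcomp Require Import all_boot all_order all_algebra.
From mathcomp Require Import finmap.
From mathcomp Require Import boolp classical_sets reals.

Set Implicit Arguments.
Unset Strict Implicit.
Unset Printing Implicit Defensive.

Import Order.TTheory GRing.Theory Num.Theory.
Local Open Scope ring_scope.
Local Open Scope fset_scope.

(* A simple graph on a vertex type V is a symmetric irreflexive relation adj.
   An undirected edge {y,z} is represented by the finite set [fset y; z]. *)

Section Graph.
Variable V : choiceType.
Variable adj : rel V.

Definition locally_finite : Prop :=
  forall y : V, exists N : {fset V}, forall z, adj y z -> z \in N.

Definition graph_connected : Prop :=
  forall y z : V, exists s : seq V, path adj y s /\ last y s = z.

Definition graph_infinite : Prop :=
  forall F : {fset V}, exists y : V, y \notin F.

Definition fin_conn_containing (x : V) (S : {fset V}) : Prop :=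
  x \in S /\
  forall y z, y \in S -> z \in S ->
    exists s : seq V, [/\ path adj y s, last y s = z & all (fun u => u \in S) s].

Definition is_vboundary (S Pi : {fset V}) : Prop :=
  forall z, z \in Pi <-> (z \notin S /\ exists2 y, y \in S & adj y z).

Definition is_eboundary (S : {fset V}) (PiE : {fset {fset V}}) : Prop :=
  forall e, e \in PiE <->
    exists y z, [/\ e = [fset y; z], y \in S, z \notin S & adj y z].

Definition edges_in (W : {fset V}) : {fset {fset V}} :=
  [fset [fset a; b] | a in W, b in W & adj a b].

(* a configuration: state (open = true) of each undirected edge *)
Definition config := {fset V} -> bool.

Definition open_step (om : config) : rel V :=
  fun a b => adj a b && om [fset a; b].

Definition A_V (x v : V) (Pi : {fset V}) (om : config) : Prop :=
  exists s : seq V,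
    [/\ path (open_step om) x s, last x s = v &
        all (fun u => (u \notin Pi) || (u == v)) (x :: s)].

Fixpoint path_edges (x : V) (s : seq V) : seq {fset V} :=
  if s is y :: s' then [fset x; y] :: path_edges y s' else [::].

Definition A_E (x : V) (e : {fset V}) (PiE : {fset {fset V}}) (om : config)
  : Prop :=
  om e /\
  exists2 w, w \in e &
  exists s : seq V,
    [/\ path (open_step om) x s, last x s = w &
        all (fun f => (f \notin PiE) || (f == e)) (path_edges x s)].

End Graph.

Section Percolation.
Variable R : realType.
Variable V : choiceType.

(* Bernoulli(p) bond percolation probability of an event A which depends
   only on the states of the edges in the finite edge set F (a cylinder
   event): sum over the 2^|F| configurations on F, the other edges being
   irrelevant (set to closed). *)
Definition extend_config (F : {fset {fset V}}) (w : {ffun F -> bool})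
  : config V :=
  fun e => if insub e is Some e' then w e' else false.

Definition perc_prob (p : R) (F : {fset {fset V}}) (A : config V -> Prop) : R :=
  \sum_(w : {ffun F -> bool})
     (\prod_(e : F) (if w e then p else 1 - p)) *
     (if `[< A (extend_config w) >] then 1 else 0).
End Percolation.

Section Cut.
Variable R : realType.
Variable V : choiceType.
Variable adj : rel V.

(* { sum_{v in Pi} P_p[A(x,v,Pi)] : Pi in B_V } ; the event A(x,v,Pi)
   depends only on the edges inside S u Pi, where Pi = d_V S. *)
Definition vcut_sums (x : V) (p : R) : set R :=
  [set t | exists (S Pi : {fset V}),
     [/\ fin_conn_containing adj x S, is_vboundary adj S Pi &
         t = \sum_(v <- Pi) perc_prob p (edges_in adj (S `|` Pi)) (A_V adj x v Pi)]].

(* { sum_{e in PiE} P_p[A(x,e,PiE)] : PiE in B_E } ; the event A(x,e,PiE)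
   depends only on the edges inside S together with the edges of PiE. *)
Definition ecut_sums (x : V) (p : R) : set R :=
  [set t | exists (S : {fset V}) (PiE : {fset {fset V}}),
     [/\ fin_conn_containing adj x S, is_eboundary adj S PiE &
         t = \sum_(e <- PiE) perc_prob p (edges_in adj S `|` PiE) (A_E adj x e PiE)]].

Definition p_cut_V (x : V) : R :=
  sup [set p : R | 0 <= p <= 1 /\ inf (vcut_sums x p) = 0].

Definition p_cut_E (x : V) : R :=
  sup [set p : R | 0 <= p <= 1 /\ inf (ecut_sums x p) = 0].
End Cut.

(* Main.v *)
Require Import Defs.
From mathcomp Require Import all_boot all_order all_algebra.
From mathcomp Require Import finmap.
From mathcomp Require Import boolp classical_sets reals.
Import Order.TTheory GRing.Theory Num.Theory.
Local Open Scope ring_scope.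
Local Open Scope fset_scope.

Section Marg.
Variable R : realType.
Variable V : choiceType.

Definition qw (p : R) (b : bool) : R := if b then p else 1 - p.
Definition restrictF (F : {fset {fset V}}) (om : config V) : config V :=
  fun f => (f \in F) && om f.

Lemma ext_val (F : {fset {fset V}}) (w : {ffun F -> bool}) (e : F) :
  extend_config w (val e) = w e.
Proof. by rewrite /extend_config valK. Qed.

Lemma ext_out (F : {fset {fset V}}) (w : {ffun F -> bool}) x :
  x \notin F -> extend_config w x = false.
Proof. by move=> xF; rewrite /extend_config insubF //; apply/negbTE. Qed.

Lemma marg (p : R) (F G : {fset {fset V}}) (A : config V -> Prop) :
  F `<=` G ->
  perc_prob p G (fun om => A (restrictF F om)) = perc_prob p F A.
Proof.
move=> FG; rewrite /perc_prob.
set g := fun u : {ffun F -> bool} => (if `[< A (extend_config u) >] then 1 else 0 : R).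
pose resF (w : {ffun G -> bool}) : {ffun F -> bool} :=
  [ffun f : F => extend_config w (val f)].
have Hres : forall w, restrictF F (extend_config w) = extend_config (resF w).
  move=> w; apply: funext => x; rewrite /restrictF.
  case xF: (x \in F); last by rewrite /= ext_out ?xF.
  by rewrite -[x]/(val [` xF]) ext_val ffunE.
pose ind (u : {ffun F -> bool}) (e : G) (b : bool) : R :=
  if val e \in F then ((extend_config u (val e) == b)%:R) else 1.
have Hg : forall w, g (resF w) = \sum_u (\prod_(e : G) ind u e (w e)) * g u.
  move=> w; rewrite (bigD1 (resF w)) //= [X in (_ + X)%R]big1; last first.
  move=> u neq.
  have [f Hf] : exists f, u f != resF w f.
    apply: contrapT => H; move/eqP: neq; apply; apply/ffunP => f.
    by apply/eqP; apply: contrapT => Hn; apply: H; exists f; apply/negP.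
  have fG : val f \in G by apply: (fsubsetP FG); exact: fsvalP.
  rewrite (bigD1 [` fG]) //= /ind /= (fsvalP f) -[val f]/(val f).
  rewrite ext_val; move: Hf; rewrite ffunE -[val f]/(val [` fG]) ext_val.
  by move=> /negbTE ->; rewrite !mul0r.
    rewrite addr0 big1 ?mul1r // => e _; rewrite /ind.
    case eF: (val e \in F) => //.
    by rewrite -[val e]/(val [` eF]) ext_val ffunE -ext_val eqxx.
under eq_bigr => w _ do rewrite Hres -[X in (_ * X)%R]/(g (resF w)) Hg mulr_sumr.
rewrite exchange_big /=; apply: eq_bigr => u _.
under eq_bigr => w _ do rewrite mulrA -big_split /=.
rewrite -mulr_suml.
rewrite -(bigA_distr_bigA (fun (e : G) (b : bool) => qw p b * ind u e b)) /=; congr (_ * _).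
under eq_bigr => e _ do rewrite big_bool /= /ind.
have -> : \prod_(e : G) (qw p true * (if val e \in F then (extend_config u (val e) == true)%:R else 1) +
     qw p false * (if val e \in F then (extend_config u (val e) == false)%:R else 1))
  = \prod_(e : G) (fun x => if x \in F then qw p (extend_config u x) else 1) (val e).
  apply: eq_bigr => e _ /=; case: (val e \in F); last by rewrite /qw !mulr1 addrC subrK.
  by case: (extend_config u (val e)); rewrite /qw /= ?mulr1 ?mulr0 ?addr0 ?add0r.
rewrite -(big_seq_fsetE _ G predT (fun x => if x \in F then qw p (extend_config u x) else 1)) /= -(big_fset_incl _ FG); last first.
  by move=> x _ /negbTE ->.
rewrite big_seq_fsetE /=; apply: eq_bigr => f _.
by rewrite (fsvalP f) ext_val.
Qed.

Variable adj : rel V.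
Lemma edges_inP (W : {fset V}) f :
  reflect (exists a b, [/\ f = [fset a; b], a \in W, b \in W & adj a b]) (f \in edges_in adj W).
Proof.
apply: (iffP (imfset2P _ _ _ _ _)).
  move=> [a aW [b]]; rewrite !inE /= => /andP[bW ab] ->.
  by exists a, b.
move=> [a [b [-> aW bW ab]]]; exists a => //; exists b => //.
by rewrite !inE /= bW ab.
Qed.

Lemma wt_ge0 (p : R) (F : {fset {fset V}}) (w : {ffun F -> bool}) :
  0 <= p <= 1 -> 0 <= \prod_(e : F) (if w e then p else 1 - p).
Proof.
move=> /andP[p0 p1]; apply: prodr_ge0 => e _; case: (w e) => //.
by rewrite subr_ge0.
Qed.

Lemma perc_ge0 (p : R) (F : {fset {fset V}}) (A : config V -> Prop) : 0 <= p <= 1 -> 0 <= perc_prob p F A.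
Proof.
move=> hp; apply: sumr_ge0 => w _; apply: mulr_ge0; first exact: wt_ge0.
by case: ifP.
Qed.

Lemma perc_le_sum (p : R) (F : {fset {fset V}}) (A : config V -> Prop)
  (I : {fset {fset V}}) (c : {fset V} -> R) (B : {fset V} -> config V -> Prop) :
  0 <= p <= 1 -> (forall i, 0 <= c i) ->
  (forall om, A om -> exists2 i, i \in I & 1 <= c i /\ B i om) ->
  perc_prob p F A <= \sum_(i <- I) c i * perc_prob p F (B i).
Proof.
move=> hp c0 hAB; rewrite /perc_prob.
under [X in _ <= X]eq_bigr => i _ do rewrite mulr_sumr.
rewrite exchange_big /=; apply: ler_sum => w _.
under [X in _ <= X]eq_bigr => i _ do rewrite mulrCA.
rewrite -mulr_sumr; apply: ler_wpM2l; first exact: wt_ge0.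
case: asboolP => [HA|_]; last first.
  by apply: sumr_ge0 => i _; apply: mulr_ge0 => //; case: ifP.
have [i iI [ci Bi]] := hAB _ HA.
rewrite (big_fsetD1 _ iI) /=; case: asboolP => // _; rewrite mulr1.
apply: (le_trans ci); rewrite lerDl.
by apply: sumr_ge0 => j _; apply: mulr_ge0 => //; case: ifP.
Qed.

Lemma exit_path (S Pi : {fset V}) (om : config V) v :
  is_vboundary adj S Pi -> v \in Pi ->
  forall a s, a \in S -> path (open_step adj om) a s -> last a s = v ->
  all (fun u => (u \notin Pi) || (u == v)) s ->
  exists y, exists2 s1,
    [/\ y \in S, open_step adj om y v, path (open_step adj om) a s1 & last a s1 = y]
    & all (fun u => u \in S) s1.
Proof.
move=> Hb vPi a s; elim: s a => [|b s IH] a aS /=.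
  move=> _ av; have [vS _] := (Hb v).1 vPi.
  by rewrite -av aS in vS.
move=> /andP[ab pb] lb /andP[hb hall].
case: (eqVneq b v) => [bv|bnv].
  by exists a; exists [::]; split => //; rewrite -bv.
have bS : b \in S.
  apply: contraT => bnS; move: hb; rewrite (negbTE bnv) orbF => /negP [].
  apply/(Hb b); split => //; exists a => //; by case/andP: ab.
have [y [s1 [yS oy ps1 ls1] as1]] := IH b bS pb lb hall.
by exists y; exists (b :: s1); rewrite /= ?ab ?bS //.
Qed.

Lemma inside_path (S : {fset V}) (PiE : {fset {fset V}}) (om : config V) e :
  is_eboundary adj S PiE ->
  forall a s1, a \in S -> all (fun u => u \in S) s1 ->
  path (open_step adj om) a s1 ->
  path (open_step adj (restrictF (edges_in adj S `|` PiE) om)) a s1 /\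
  all (fun f => (f \notin PiE) || (f == e)) (path_edges a s1).
Proof.
move=> Hb a s1; elim: s1 a => [|b s IH] a aS //= /andP[bS as1] /andP[/andP[ab oab] ps].
have [IH1 IH2] := IH b bS as1 ps.
have Ein : [fset a; b] \in edges_in adj S by apply/edges_inP; exists a, b.
have EnP : [fset a; b] \notin PiE.
  apply/negP => /(Hb _) [y [z [Heq yS zS _]]].
  have : z \in [fset a; b] by rewrite Heq !inE eqxx orbT.
  by rewrite !inE => /orP[/eqP zE|/eqP zE]; rewrite zE ?aS ?bS in zS.
rewrite IH2 EnP /=; split => //; rewrite /= IH1 andbT /open_step ab /restrictF inE Ein oab.
by [].
Qed.

Lemma key (p : R) (x : V) (S Pi : {fset V}) (PiE : {fset {fset V}}) :
  0 <= p <= 1 -> x \in S -> is_vboundary adj S Pi -> is_eboundary adj S PiE ->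
  \sum_(v <- Pi) perc_prob p (edges_in adj (S `|` Pi)) (A_V adj x v Pi) <=
  \sum_(e <- PiE) perc_prob p (edges_in adj S `|` PiE) (A_E adj x e PiE).
Proof.
move=> hp xS Hv He.
set F1 := edges_in adj (S `|` Pi); set F2 := edges_in adj S `|` PiE.
have F21 : F2 `<=` F1.
  apply/fsubsetP => f; rewrite inE => /orP[/edges_inP [a [b [-> aS bS ab]]]|/He [y [z [-> yS zS yz]]]]; apply/edges_inP.
    by exists a, b; rewrite !inE aS bS.
  exists y, z; split => //; first by rewrite inE yS.
  rewrite inE (_ : z \in Pi) ?orbT //; apply/Hv; split => //; exists y => //.
pose B e om := A_E adj x e PiE (restrictF F2 om).
have step1 : forall v, v \in Pi -> perc_prob p F1 (A_V adj x v Pi) <=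
    \sum_(e <- PiE) (v \in e)%:R * perc_prob p F1 (B e).
  move=> v vPi; apply: (@perc_le_sum p F1 _ PiE (fun e => (v \in e)%:R) B) => //.
  move=> om [s [ps ls /= /andP[_ als]]].
  have [y [s1 [yS oy ps1 ls1] as1]] := exit_path S Pi om v Hv vPi x s xS ps ls als.
  have [vS _] := (Hv v).1 vPi.
  have eP : [fset y; v] \in PiE by apply/He; exists y, v; split=> //; case/andP: oy.
  exists [fset y; v] => //; split; first by rewrite !inE eqxx orbT.
  have [P1 P2] := inside_path S PiE om [fset y; v] He x s1 xS as1 ps1.
  split; first by rewrite /restrictF inE eP orbT; case/andP: oy.
  exists y; first by rewrite !inE eqxx.
  by exists s1.
apply: (@le_trans _ _ (\sum_(v <- Pi) \sum_(e <- PiE) (v \in e)%:R * perc_prob p F1 (B e))).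
  rewrite big_seq [X in _ <= X]big_seq; apply: ler_sum => v vPi; exact: step1.
rewrite exchange_big /= [X in _ <= X]big_seq big_seq; apply: ler_sum => e eP.
rewrite -mulr_suml /B (marg p F2 F1 _ F21).
apply: ler_piMl; first exact: perc_ge0.
have [y [z [Ee yS zS yz]]] := (He e).1 eP.
have zPi : z \in Pi by apply/Hv; split => //; exists y.
rewrite (big_fsetD1 _ zPi) big1_fset ?addr0; first by rewrite Ee !inE eqxx orbT /= addr0.
move=> v; rewrite !inE => /andP[vnz vPi] _.
have [vS _] := (Hv v).1 vPi.
rewrite Ee !inE (negbTE vnz) orbF.
case: (eqVneq v y) => [vy|] //; by rewrite vy yS in vS.
Qed.
End Marg.

Local Open Scope classical_set_scope.
Theorem lemma2p10 (R : realType) (V : choiceType) (adj : rel V)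
  (adj_sym : symmetric adj) (adj_irr : irreflexive adj)
  (lf : locally_finite adj) (conn : graph_connected adj)
  (inf_G : graph_infinite V) (x : V) :
  p_cut_E R adj x <= p_cut_V R adj x.
Proof.
pose N y := sval (cid (lf y)).
have HN : forall y z, adj y z -> z \in N y := fun y => svalP (cid (lf y)).
pose mkPi (S : {fset V}) := [fset z in (\bigcup_(y <- S) N y)%fset | (z \notin S) && has (fun y => adj y z) S].
have HPi : forall S, is_vboundary adj S (mkPi S).
  move=> S z; rewrite /mkPi !inE /=; split.
    move=> /andP[_ /andP[zS /hasP [y yS yz]]]; split => //; by exists y.
  move=> [zS [y yS yz]]; rewrite zS /=; apply/andP; split.
    by apply/bigfcupP; exists y; [rewrite yS | exact: HN].
  by apply/hasP; exists y.
have main : forall p : R, 0 <= p <= 1 -> inf (ecut_sums adj x p) = 0 ->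
    inf (vcut_sums adj x p) = 0.
  move=> p hp hE.
  have Eone : ecut_sums adj x p !=set0.
    pose PiE0 := [fset [fset x; z] | z in [fset z in N x | adj x z]].
    eexists; exists [fset x], PiE0; split; last reflexivity.
      split; first by rewrite inE.
      by move=> y z; rewrite !inE => /eqP-> /eqP->; exists [::].
    move=> e; split.
      move=> /imfsetP [z]; rewrite !inE /= => /andP[_ xz] ->; exists x, z; split => //.
        by rewrite inE.
      by rewrite inE; apply/eqP => zx; rewrite zx adj_irr in xz.
    move=> [y [z [->]]]; rewrite !inE => /eqP-> _ xz; apply/imfsetP; exists z => //.
    by rewrite !inE /= HN ?xz.
  have toV : forall t, ecut_sums adj x p t -> exists2 t', vcut_sums adj x p t' & t' <= t.
    move=> t [S [PiE [HS He ->]]]; eexists.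
      by exists S, (mkPi S); split; [exact HS | exact: HPi | reflexivity].
    exact: key hp HS.1 (HPi S) He.
  have Vlb : lbound (vcut_sums adj x p) 0.
    move=> t [S [Pi [_ _ ->]]]; apply: sumr_ge0 => v _; exact: perc_ge0.
  have [t0 Et0] := Eone.
  have [t0' Vt0' _] := toV t0 Et0.
  apply/eqP; rewrite eq_le; apply/andP; split; last first.
    exact: (lb_le_inf (ex_intro _ t0' Vt0') Vlb).
  rewrite -hE; apply: lb_le_inf; first by exists t0.
  move=> t Et; have [t' Vt' le] := toV t Et; apply: le_trans le.
  by apply: ge_inf => //; exists 0.
rewrite /p_cut_E /p_cut_V.
set SE := [set p | _]; set SV := [set p | _].
have SESV : forall p, SE p -> SV p by move=> p [hp hE]; split => //; exact: main.
have hubV : has_ubound SV by exists 1 => p [/andP[_ ->] _].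
case: (pselect (SE !=set0)) => [ne|emp].
  apply: ge_sup ne _ => p Ep; exact: (ub_le_sup hubV (SESV _ Ep)).
have -> : SE = set0.
  by apply/seteqP; split => p // Ep; apply: emp; exists p.
rewrite sup0; case: (pselect (SV !=set0)) => [[p Vp]|emp'].
  apply: le_trans (ub_le_sup hubV Vp); by case: Vp => /andP[].
have -> : SV = set0.
  by apply/seteqP; split => p // Ep; apply: emp'; exists p.
by rewrite sup0.
Qed.
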